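(* Let $R$ be a P$v$MD and let $P$ be a $t$-prime ideal of $R$. The following conditions are equivalent: (i) $P$ is branched; (ii) $P$ is a minimal prime of a principal ideal of $R$; (iii) $P$ is a minimal prime of a finitely generated ideal of $R$; (iv) $P$ is a minimal prime of a $v$-finite divisorial ideal of $R$; (v) $P$ is not the union of the set of prime ideals of $R$ properly contained in $P$.
   Context: $R$ is an integral domain with quotient field $K\neq R$. For nonzero $R$-submodules $A,B$ of $K$, $(A:B)=\{x\in K: xB\subseteq A\}$. For a nonzero fractional ideal $I$, $I_v=(R:(R:I))$ and $I_t=\bigcup\{J_v: J\subseteq I \text{ nonzero finitely generated}\}$. $I$ is divisorial if $I=I_v$ and a $t$-ideal if $I=I_t$; a $v$-finite divisorial ideal is an ideal of the form $J_v$ with $J$ finitely generated. A $t$-prime is a prime $t$-ideal; a $t$-maximal ideal is an ideal maximal among proper $t$-ideals (it is prime). $R$ is a P$v$MD (Prüfer $v$-multiplication domain) if $R_M$ is a valuation domain for every $t$-maximal ideal $M$. A prime ideal $P$ is branched if there exists a $P$-primary ideal different from $P$. *)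

(* Defs.v *)
From HB Require Import structures.
From mathcomp Require Import all_boot all_order all_algebra.
Set Implicit Arguments. Unset Strict Implicit. Unset Printing Implicit Defensive.
Import Order.TTheory GRing.Theory Num.Theory.
Local Open Scope ring_scope.

Section Defs.
Variable R : idomainType.
Local Notation K := {fraction R}.
Local Notation "x %:F" := (@FracField.tofrac R x).

Definition Rsub : K -> Prop := fun x => exists r : R, x = r%:F.

Definition colon (A B : K -> Prop) : K -> Prop :=
  fun x => forall b, B b -> A (x * b).

Definition vop (A : K -> Prop) : K -> Prop := colon Rsub (colon Rsub A).

Definition Kgen (l : seq K) : K -> Prop :=
  fun x => exists c : seq R, x = \sum_(i < size l) (c`_i)%:F * l`_i.

Definition t_closure (A : K -> Prop) : K -> Prop :=
  fun x => exists l : seq K,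
    (forall y, y \in l -> A y) /\ has (fun y => y != 0) l /\ vop (Kgen l) x.

Definition set_eq (T : Type) (A B : T -> Prop) := forall x, A x <-> B x.

Definition is_ideal (I : R -> Prop) : Prop :=
  [/\ I 0, (forall a b, I a -> I b -> I (a + b)) & (forall r a, I a -> I (r * a))].

Definition is_prime (P : R -> Prop) : Prop :=
  [/\ is_ideal P, ~ P 1 & (forall a b, P (a * b) -> P a \/ P b)].

Definition ext_ideal (I : R -> Prop) : K -> Prop := fun x => exists r, I r /\ x = r%:F.

Definition t_ideal (I : R -> Prop) : Prop := set_eq (ext_ideal I) (t_closure (ext_ideal I)).

Definition nonzero (I : R -> Prop) : Prop := exists a, I a /\ a != 0.

Definition t_prime (P : R -> Prop) : Prop := [/\ is_prime P, nonzero P & t_ideal P].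

Definition proper_t_ideal (I : R -> Prop) : Prop :=
  [/\ is_ideal I, nonzero I, ~ I 1 & t_ideal I].

Definition t_maximal (M : R -> Prop) : Prop :=
  proper_t_ideal M /\
  (forall J, proper_t_ideal J -> (forall x, M x -> J x) -> set_eq J M).

Definition localization (P : R -> Prop) : K -> Prop :=
  fun x => exists a s : R, ~ P s /\ x = a%:F / s%:F.

(* a subring V of K with quotient field K is a valuation domain *)
Definition valuation_subring (V : K -> Prop) : Prop :=
  forall x : K, x != 0 -> V x \/ V x^-1.

Definition PvMD : Prop :=
  forall M, t_maximal M -> valuation_subring (localization M).

Definition radical_is (Q P : R -> Prop) : Prop :=
  forall x, P x <-> exists n, Q (x ^+ n).

Definition is_primary (Q : R -> Prop) : Prop :=
  [/\ is_ideal Q, ~ Q 1 &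
      (forall a b, Q (a * b) -> ~ Q a -> exists n, Q (b ^+ n))].

Definition P_primary (P Q : R -> Prop) : Prop := is_primary Q /\ radical_is Q P.

Definition branched (P : R -> Prop) : Prop :=
  exists Q, P_primary P Q /\ ~ set_eq Q P.

Definition minimal_prime_of (I P : R -> Prop) : Prop :=
  [/\ is_prime P, (forall x, I x -> P x) &
      (forall Q, is_prime Q -> (forall x, I x -> Q x) -> (forall x, Q x -> P x) ->
                 set_eq Q P)].

Definition principal_ideal (a : R) : R -> Prop := fun x => exists r, x = r * a.

Definition Rgen (l : seq R) : R -> Prop :=
  fun x => exists c : seq R, x = \sum_(i < size l) c`_i * l`_i.


Definition v_finite_divisorial (I : R -> Prop) : Prop :=
  exists l : seq K, has (fun y => y != 0) l /\
    set_eq (ext_ideal I) (vop (Kgen l)).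

Definition strict_subset (Q P : R -> Prop) : Prop :=
  (forall x, Q x -> P x) /\ exists x, P x /\ ~ Q x.

End Defs.

(* Main.v *)
Require Import Defs.
From HB Require Import structures.
From mathcomp Require Import all_boot all_order all_algebra.
From mathcomp Require Import ring.
From mathcomp Require boolp classical_sets.
From Stdlib Require Import Classical.
Import GRing.Theory.
Local Open Scope ring_scope.


Section RPart.
Variable R : idomainType.
Implicit Types (I Q J P : R -> Prop) (a : R).

Lemma prime_pow Q y n : is_prime Q -> Q (y ^+ n) -> Q y.
Proof.
case=> _ Q1 Qm; elim: n => [|n IH]; first by rewrite expr0.
by rewrite exprS => /Qm [] //; exact IH.
Qed.

Lemma prime_notM Q s t : is_prime Q -> ~ Q s -> ~ Q t -> ~ Q (s * t).
Proof. by case=> _ _ Qm Hs Ht /Qm []. Qed.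

Arguments prime_notM {Q s t}.

Lemma zero_prime : is_prime (fun x : R => x = 0).
Proof.
split; first split.
- by [].
- by move=> a b -> ->; rewrite addr0.
- by move=> r a ->; rewrite mulr0.
- by move/eqP; rewrite oner_eq0.
- by move=> a b /eqP; rewrite mulf_eq0 => /orP [/eqP|/eqP]; auto.
Qed.

Lemma min_nonzero I P : minimal_prime_of I P -> nonzero P -> exists x, I x /\ x != 0.
Proof.
case=> Pp IP Pmin [b [Pb b0]]; apply: NNPP => H.
have: set_eq (fun x => x = 0) P.
  apply: Pmin => //; first exact: zero_prime.
    move=> x Ix; case: (eqVneq x 0) => // x0; exfalso; apply: H; by exists x.
  by move=> x ->; case: Pp => [[]].
by move/(_ b) => [_ /(_ Pb)] /eqP; rewrite (negbTE b0).
Qed.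

Arguments min_nonzero {I P}.

Lemma min_ext I J P : set_eq I J -> minimal_prime_of I P -> minimal_prime_of J P.
Proof.
move=> E [Pp IP Pmin]; split => //.
- by move=> x /E /IP.
- by move=> Q Qp JQ QP; apply: Pmin => // x /E /JQ.
Qed.

Definition Uni P := fun x : R => exists Q, is_prime Q /\ strict_subset Q P /\ Q x.

Lemma notunion_principal P : is_prime P -> ~ set_eq P (Uni P) ->
  exists a, minimal_prime_of (principal_ideal a) P.
Proof.
move=> HP H; have [[P0 PD PM] P1 Pm] := HP.
have [a [Pa Ua]] : exists a, P a /\ ~ Uni P a.
  apply: NNPP => H'; apply: H => x; split.
    by move=> Px; apply: NNPP => Ux; apply: H'; exists x.
  by move=> [Q [_ [[QP _] Qx]]]; apply: QP.
exists a; split => //.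
- by move=> x [r ->]; apply: PM.
- move=> Q Qp Qa QP x; split; first exact: QP.
  move=> Px; apply: NNPP => Qx; apply: Ua; exists Q; split => //; split.
    by split => //; exists x.
  by apply: Qa; exists 1; rewrite mul1r.
Qed.

Lemma principal_Rgen P a : minimal_prime_of (principal_ideal a) P ->
  exists l, minimal_prime_of (Rgen l) P.
Proof.
move=> H; exists [:: a]; apply: min_ext H => x; split.
- by move=> [r ->]; exists [:: r]; rewrite /= big_ord1.
- by move=> [c ->]; exists c`_0; rewrite /= big_ord1.
Qed.

Section WithVal.
Variable P : R -> Prop.
Hypothesis HP : is_prime P.
Hypothesis Rval : forall a b : R, exists c t, ~ P t /\ (a * t = c * b \/ b * t = c * a).

Lemma branched_notunion : branched P -> ~ set_eq P (Uni P).
Proof.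
move=> [Q [[[QI Q1 Qprim] Qrad] QneP]] Heq; apply: QneP => x; split.
- by move=> Qx; apply/Qrad; exists 1%N; rewrite expr1.
- move=> Px; have [Q' [Q'p [[Q'P [y [Py Q'y]]] Q'x]]] := proj1 (Heq x) Px.
  have [n Qyn] := proj1 (Qrad y) Py.
  have [c [t [Pt [E|E]]]] := Rval x (y ^+ n).
  + apply: NNPP => Qx; case: QI => _ _ QM.
    have := Qprim x t; rewrite E => /(_ (QM c _ Qyn) Qx) [m Qtm].
    by apply: Pt; apply/Qrad; exists m.
  + case: (Q'p) => [[_ _ Q'M] _ Q'm].
    have := Q'M c x Q'x; rewrite -E => /Q'm [Hy|Ht].
      by case: Q'y; apply: prime_pow Hy.
    by case: Pt; apply: Q'P.
Qed.


Lemma principal_branched a : minimal_prime_of (principal_ideal a) P -> nonzero P -> branched P.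
Proof.
move=> Hmin HPnz.
have a0 : a != 0.
  have [x [[r ->] x0]] := min_nonzero Hmin HPnz.
  by move: x0; apply: contraNneq => ->; rewrite mulr0.
case: (Hmin) => _ aP Pmin.
have Pa : P a by apply: aP; exists 1; rewrite mul1r.
have [[P0 PD PM] P1 Pm] := HP.
pose Q x := exists t r, ~ P t /\ x * t = r * (a * a).
have Hrad : forall x, P x -> exists n, Q (x ^+ n).
{ move=> x Px; apply: NNPP => Hn.
  have Hn' : forall n t r, ~ P t -> x ^+ n * t <> r * (a * a).
    by move=> n t r Pt E; apply: Hn; exists n, t, r.
  have x0 : x != 0.
    apply/eqP => x0; apply: (Hn' 1%N 1 0) => //.
    by rewrite x0 expr1 !mul0r.
  have F1 : forall n, exists t c, ~ P t /\ (a * a) * t = c * x ^+ n.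
    move=> n; have [c [t [Pt [E|E]]]] := Rval (x ^+ n) (a * a).
      by case: (Hn' _ _ _ Pt E).
    by exists t, c.
  pose N y := forall n, exists t c, ~ P t /\ y * t = c * x ^+ n.
  have Np : is_prime N.
  { split; first split.
    - by move=> n; exists 1, 0; split => //; rewrite !mul0r.
    - move=> y z Hy Hz n.
      have [t [c [Pt E1]]] := Hy n; have [u [d [Pu E2]]] := Hz n.
      exists (t * u), (c * u + d * t); split; first exact: prime_notM.
      have -> : (y + z) * (t * u) = (y * t) * u + (z * u) * t by ring.
      by rewrite E1 E2; ring.
    - move=> k y Hy n; have [t [c [Pt E]]] := Hy n; exists t, (k * c); split => //.
      transitivity (k * (y * t)); first ring.
      by rewrite E; ring.
    - move=> H1; have [t [c [Pt E]]] := H1 1%N; apply: Pt.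
      by rewrite mul1r in E; rewrite E expr1; apply: PM.
    - move=> y z Hyz; apply: NNPP => Hor.
      have [i Hi] : exists i, forall t c, ~ P t -> y * t <> c * x ^+ i.
        apply: NNPP => H; apply: Hor; left => n; apply: NNPP => H2; apply: H.
        by exists n => t c Pt E; apply: H2; exists t, c.
      have [j Hj] : exists j, forall t c, ~ P t -> z * t <> c * x ^+ j.
        apply: NNPP => H; apply: Hor; right => n; apply: NNPP => H2; apply: H.
        by exists n => t c Pt E; apply: H2; exists t, c.
      have [c1 [t1 [Pt1 [E1|E1]]]] := Rval y (x ^+ i).
        by case: (Hi t1 c1 Pt1 E1).
      have [c2 [t2 [Pt2 [E2|E2]]]] := Rval z (x ^+ j).
        by case: (Hj t2 c2 Pt2 E2).
      have [t3 [c3 [Pt3 E3]]] := Hyz (i + j).+1.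
      have E : x ^+ (i + j) * (t1 * t2 * t3) = x ^+ (i + j) * (c1 * c2 * c3 * x).
        transitivity ((x ^+ i * t1) * (x ^+ j * t2) * t3); first by rewrite exprD; ring.
        rewrite E1 E2; transitivity (c1 * c2 * (y * z * t3)); first ring.
        by rewrite E3 exprS; ring.
      have Et := mulfI (expf_neq0 (i + j) x0) E.
      apply: (prime_notM HP (prime_notM HP Pt1 Pt2) Pt3).
      by rewrite Et; apply: PM. }
  have Na : N a.
    have Naa : N (a * a) by move=> n; have [t [c [Pt E]]] := F1 n; exists t, c.
    by case: (Np) => _ _ /(_ a a Naa) [].
  have NP : forall y, N y -> P y.
    move=> y /(_ 1%N) [t [c [Pt E]]]; rewrite expr1 in E.
    have : P (y * t) by rewrite E; apply: PM.
    by case/Pm.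
  have NI : forall z, principal_ideal a z -> N z.
    by move=> z [r ->]; case: (Np) => [[_ _ NM] _ _]; apply: NM.
  have [_ /(_ Px) Nx] := Pmin N Np NI NP x.
  have [t [c [Pt E]]] := Nx 2%N; apply: Pt.
  have : x * t = x * (c * x) by rewrite E expr2; ring.
  by move/(mulfI x0) => ->; apply: PM. }
exists Q; split; last first.
  move=> Heq; have [t [r [Pt E]]] := proj2 (Heq a) Pa; apply: Pt.
  have : a * t = a * (r * a) by rewrite E; ring.
  by move/(mulfI a0) => ->; apply: PM.
split.
- split; first split.
  + by exists 1, 0; split => //; rewrite !mul0r.
  + move=> x y [t [r [Pt E1]]] [u [s [Pu E2]]].
    exists (t * u), (r * u + s * t); split; first exact: prime_notM.
    have -> : (x + y) * (t * u) = (x * t) * u + (y * u) * t by ring.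
    by rewrite E1 E2; ring.
  + move=> k x [t [r [Pt E]]]; exists t, (k * r); split => //.
    transitivity (k * (x * t)); first ring.
    by rewrite E; ring.
  + move=> [t [r [Pt E]]]; apply: Pt; rewrite mul1r in E; rewrite E.
    exact: (PM _ _ (PM _ _ Pa)).
  + move=> x y [t [r [Pt E]]] Qx; case: (classic (P y)) => Py; first exact: Hrad.
    exfalso; apply: Qx; exists (y * t), r; split; first exact: prime_notM.
    by rewrite mulrA.
- move=> x; split; first exact: Hrad.
  move=> [n [t [r [Pt E]]]]; apply: (@prime_pow _ _ n HP).
  have : P (x ^+ n * t) by rewrite E; exact: (PM _ _ (PM _ _ Pa)).
  by case/Pm.
Qed.

Lemma pick_gen (l : seq R) : l != [::] -> exists a, a \in l /\
  exists s, ~ P s /\ forall b, b \in l -> exists c, s * b = c * a.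
Proof.
have [[P0 PD PM] P1 Pm] := HP.
elim: l => [//|y l IH] _; case: l IH => [|z l] IH.
  exists y; split; first by rewrite mem_head.
  exists 1; split => // b; rewrite inE => /eqP ->; by exists 1.
have [a [al [s [Ps Hs]]]] := IH isT.
have [c [t [Pt [E|E]]]] := Rval y a.
- exists a; split; first by rewrite inE al orbT.
  exists (s * t); split; first exact: prime_notM.
  move=> b; rewrite inE => /orP [/eqP ->| bl].
    by exists (s * c); transitivity (s * (y * t)); [ring | rewrite E; ring].
  have [d Ed] := Hs b bl; exists (t * d).
  by transitivity (t * (s * b)); [ring | rewrite Ed; ring].
- exists y; split; first by rewrite mem_head.
  exists (s * t); split; first exact: prime_notM.
  move=> b; rewrite inE => /orP [/eqP ->| bl]; first by exists (s * t).
  have [d Ed] := Hs b bl; exists (d * c).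
  transitivity (t * (s * b)); [ring | rewrite Ed].
  by transitivity (d * (a * t)); [ring | rewrite E; ring].
Qed.

End WithVal.
End RPart.


Section KPart.
Variable R : idomainType.
Implicit Types (I Q J P : R -> Prop) (a : R).
Local Notation K := {fraction R}.
Local Notation "x %:F" := (@FracField.tofrac R x).

Lemma sub_vop (A : K -> Prop) x : A x -> vop A x.
Proof. by move=> Ax b Hb; rewrite mulrC; apply: Hb. Qed.

Lemma Kgen_mem (l : seq K) y : y \in l -> Kgen l y.
Proof.
elim: l => // z l IH; rewrite inE => /orP [/eqP ->| yl].
- exists [:: 1]; rewrite big_ord_recl /= rmorph1 mul1r big1 ?addr0 // => i _.
  by rewrite /= nth_nil rmorph0 mul0r.
- have [c Ec] := IH yl; exists (0 :: c).
  rewrite big_ord_recl /= rmorph0 mul0r add0r Ec; apply: eq_bigr => i _.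
  by [].
Qed.

Lemma Rgen_mem (l : seq R) y : y \in l -> Rgen l y.
Proof.
elim: l => // z l IH; rewrite inE => /orP [/eqP ->| yl].
- exists [:: 1]; rewrite big_ord_recl /= mul1r big1 ?addr0 // => i _.
  by rewrite /= nth_nil mul0r.
- have [c Ec] := IH yl; exists (0 :: c).
  rewrite big_ord_recl /= mul0r add0r Ec; apply: eq_bigr => i _.
  by [].
Qed.

Lemma tofrac_sum (l c : seq R) :
  (\sum_(i < size l) c`_i * l`_i)%:F =
  \sum_(i < size (map (@FracField.tofrac R) l)) (c`_i)%:F * (map (@FracField.tofrac R) l)`_i.
Proof.
rewrite rmorph_sum size_map; apply: eq_bigr => i _.
by rewrite rmorphM (nth_map 0).
Qed.

Lemma Kgen_map (l : seq R) x :
  Kgen (map (@FracField.tofrac R) l) x <-> exists r, Rgen l r /\ x = r%:F.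
Proof.
split.
- by move=> [c ->]; exists (\sum_(i < size l) c`_i * l`_i); split;
    [exists c | rewrite tofrac_sum].
- by move=> [r [[c ->] ->]]; exists c; rewrite tofrac_sum.
Qed.

Lemma vop_map_int (l : seq R) x :
  vop (Kgen (map (@FracField.tofrac R) l)) x -> exists r, x = r%:F.
Proof.
move=> H; have : Rsub (x * 1).
  apply: H => b /Kgen_map [r [_ ->]]; rewrite mul1r; by exists r.
by rewrite mulr1.
Qed.

Lemma map_of_Rsub (L : seq K) : (forall y, y \in L -> exists r, y = r%:F) ->
  exists l, L = map (@FracField.tofrac R) l.
Proof.
elim: L => [|y L IH] H; first by exists [::].
have [r ->] := H y (mem_head _ _).
have [l ->] : exists l, L = map (@FracField.tofrac R) l.
  by apply: IH => z zL; apply: H; rewrite inE zL orbT.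
by exists (r :: l).
Qed.


Lemma Rval_of P M : ~ P 1 -> (forall x, P x -> M x) -> is_ideal M ->
  valuation_subring (localization M) ->
  forall a b : R, exists c t, ~ P t /\ (a * t = c * b \/ b * t = c * a).
Proof.
move=> P1 PM [M0 _ _] HV a b.
case: (eqVneq a 0) => [->|a0]; first by exists 0, 1; split => //; left; rewrite !mul0r.
case: (eqVneq b 0) => [->|b0]; first by exists 0, 1; split => //; right; rewrite !mul0r.
have x0 : a%:F / b%:F != 0 by rewrite mulf_neq0 ?invr_eq0 ?tofrac_eq0.
have nM : forall t, ~ M t -> t%:F != 0.
  by move=> t Mt; rewrite tofrac_eq0; apply/eqP => t0; apply: Mt; rewrite t0.
have a0' : a%:F != 0 by rewrite tofrac_eq0.
have b0' : b%:F != 0 by rewrite tofrac_eq0.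
case: (HV _ x0) => [[c [t [Mt E]]] | [c [t [Mt E]]]]; exists c, t;
  (split; first by move/PM).
- left; apply/eqP; rewrite -tofrac_eq !rmorphM /=.
  have E' : a%:F = c%:F / t%:F * b%:F by rewrite -E divfK.
  by rewrite E' mulrAC divfK //; apply: nM.
- right; apply/eqP; rewrite -tofrac_eq !rmorphM /=.
  rewrite invf_div in E.
  have E' : b%:F = c%:F / t%:F * a%:F by rewrite -E divfK.
  by rewrite E' mulrAC divfK //; apply: nM.
Qed.

Section WithP.
Variable P : R -> Prop.
Hypothesis HP : is_prime P.

Lemma Rgen_vfd l : minimal_prime_of (Rgen l) P -> t_ideal P -> nonzero P ->
  exists I, v_finite_divisorial I /\ minimal_prime_of I P.
Proof.
move=> Hmin tP nzP; have [x [[c Ex] x0]] := @min_nonzero _ _ _ Hmin nzP.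
case: (Hmin) => Pp RP Pmin.
have hl : has (fun y => y != 0) l.
  apply: contraT => /hasPn H; move: x0; rewrite Ex big1 ?eqxx // => i _.
  by rewrite (eqP (negbNE (H _ (mem_nth 0 (ltn_ord i))))) mulr0.
pose L := map (@FracField.tofrac R) l.
have hL : has (fun y => y != 0) L.
  move/hasP: hl => [b bl b0]; apply/hasP; exists b%:F; [exact: map_f | by rewrite tofrac_eq0].
pose I r := vop (Kgen L) r%:F.
exists I; split.
- exists L; split => // y; split; first by move=> [r [Ir ->]].
  move=> Hy; have [r Er] := vop_map_int _ _ Hy; exists r; split => //; by rewrite /I -Er.
- split => //.
  + move=> r Ir; have : ext_ideal P r%:F.
      apply/(tP r%:F); exists L; split; last by split.
      move=> y /mapP [b bl ->]; exists b; split => //; apply: RP; exact: Rgen_mem.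
    by move=> [r' [Pr' /eqP]]; rewrite tofrac_eq => /eqP ->.
  + move=> Q Qp IQ QP; apply: Pmin => // y Ry; apply: IQ; apply: sub_vop.
    by apply/Kgen_map; exists y.
Qed.

Hypothesis Rval : forall a b : R, exists c t, ~ P t /\ (a * t = c * b \/ b * t = c * a).

Lemma vfd_principal I : v_finite_divisorial I -> minimal_prime_of I P ->
  exists a, minimal_prime_of (principal_ideal a) P.
Proof.
move=> [L [Lnz HI]] [Pp IP Pmin].
have [[P0 PD PM] P1 Pm] := HP.
have LR : forall y, y \in L -> exists r, I r /\ y = r%:F.
  by move=> y yL; apply/HI; apply: sub_vop; apply: Kgen_mem.
have [l El] : exists l, L = map (@FracField.tofrac R) l.
  by apply: map_of_Rsub => y /LR [r [_ ->]]; exists r.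
subst L.
have l0 : l != [::] by move: Lnz; case: (l).
have [a [al [s [Ps Hs]]]] := @pick_gen _ _ HP Rval _ l0.
have Ia : I a.
  have [r [Ir E]] := LR _ (map_f _ al).
  by move/eqP: E; rewrite tofrac_eq => /eqP ->.
have s0 : s != 0 by apply/eqP => s0; apply: Ps; rewrite s0.
have a0 : a != 0.
  apply/eqP => a0; move/hasP: Lnz => [y /mapP [b bl ->]] /=.
  rewrite tofrac_eq0 => /negP; apply.
  have [c Ec] := Hs b bl; move: Ec; rewrite a0 mulr0 => /eqP.
  by rewrite mulf_eq0 (negbTE s0).
have a0' : a%:F != 0 by rewrite tofrac_eq0.
exists a; split => //.
- by move=> x [r ->]; apply: PM; exact: IP.
- move=> Q Qp Qa QP; apply: Pmin => // x Ix.
  have Hgen : forall r, Rgen l r -> exists e, s * r = e * a.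
    move=> r [c ->]; rewrite mulr_sumr.
    apply: (big_ind (fun v => exists e, v = e * a)).
    + by exists 0; rewrite mul0r.
    + by move=> v w [e ->] [e' ->]; exists (e + e'); rewrite mulrDl.
    + move=> i _; have [d Ed] := Hs _ (mem_nth 0 (ltn_ord i)).
      exists (c`_i * d); transitivity (c`_i * (s * l`_i)); first ring.
      by rewrite Ed; ring.
  have Hw : colon (@Rsub R) (Kgen (map (@FracField.tofrac R) l)) (s%:F / a%:F).
    move=> z /Kgen_map [r [/Hgen [e Ee] ->]]; exists e.
    transitivity ((s * r)%:F / a%:F); first by rewrite rmorphM /= mulrAC.
    by rewrite Ee rmorphM /= mulfK.
  have [u Eu] : Rsub (x%:F * (s%:F / a%:F)).
    have : ext_ideal I x%:F by exists x.
    by move/HI/(_ _ Hw).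
  have Exs : x * s = u * a.
    by apply/eqP; rewrite -tofrac_eq !rmorphM /= -Eu -mulrA divfK.
  have Qxs : Q (x * s) by rewrite Exs; apply: Qa; exists u.
  case: Qp => _ _ /(_ _ _ Qxs) [//|/QP //].
Qed.

End WithP.

End KPart.


Section ZornPart.
Variable R : idomainType.
Implicit Types (I Q J P : R -> Prop) (a : R).
Local Notation K := {fraction R}.
Local Notation "x %:F" := (@FracField.tofrac R x).

Lemma union_chain (G : (R -> Prop) -> Prop) J0 : G J0 ->
  (forall J, G J -> proper_t_ideal J) ->
  (forall J1 J2, G J1 -> G J2 -> (forall x, J1 x -> J2 x) \/ (forall x, J2 x -> J1 x)) ->
  proper_t_ideal (fun x => exists J, G J /\ J x).
Proof.
move=> G0 Gp Gch; pose U := fun x => exists J, G J /\ J x.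
have Gid : forall J, G J -> is_ideal J by move=> J /Gp [].
have mono : forall A B : K -> Prop, (forall y, A y -> B y) ->
    forall x, t_closure A x -> t_closure B x.
  by move=> A B AB x [l [lA [lnz v]]]; exists l; split => // y /lA /AB.
have extm : forall J, G J -> forall y, ext_ideal J y -> ext_ideal U y.
  by move=> J GJ y [r [Jr ->]]; exists r; split => //; exists J.
split.
- split.
  + by exists J0; split => //; case: (Gid _ G0).
  + move=> a b [J1 [G1 J1a]] [J2 [G2 J2b]]; case: (Gch _ _ G1 G2) => H.
    * exists J2; split => //; case: (Gid _ G2) => _ JD _; apply: JD => //; exact: H.
    * exists J1; split => //; case: (Gid _ G1) => _ JD _; apply: JD => //; exact: H.
  + move=> r a [J [GJ Ja]]; exists J; split => //; case: (Gid _ GJ) => _ _ JM; exact: JM.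
- by have [_ [b [Jb b0]] _ _] := Gp _ G0; exists b; split => //; exists J0.
- by move=> [J [GJ J1]]; have [_ _ /(_ J1) ? _] := Gp _ GJ.
- move=> x; split.
  + move=> [r [[J [GJ Jr]] ->]]; have [_ _ _ tJ] := Gp _ GJ.
    apply: (mono (ext_ideal J)); first exact: extm.
    by apply/(tJ r%:F); exists r.
  + move=> [l [lU [lnz v]]].
    have [J [GJ lJ]] : exists J, G J /\ forall y, y \in l -> ext_ideal J y.
      move: lU; clear lnz v; elim: l => [|y l IH] lU; first by exists J0; split.
      have [r [[J1 [G1 J1r]] Ey]] := lU y (mem_head _ _).
      have lU' : forall z, z \in l -> ext_ideal U z.
        by move=> z zl; apply: lU; rewrite inE zl orbT.
      have [J2 [G2 lJ2]] := IH lU'.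
      case: (Gch _ _ G1 G2) => H.
      * exists J2; split => // z; rewrite inE => /orP [/eqP ->|zl]; last exact: lJ2.
        by exists r; split => //; apply: H.
      * exists J1; split => // z; rewrite inE => /orP [/eqP ->|zl]; first by exists r.
        by have [r' [J2r' ->]] := lJ2 z zl; exists r'; split => //; apply: H.
    have [_ _ _ tJ] := Gp _ GJ.
    have : ext_ideal J x by apply/(tJ x); exists l.
    exact: extm.
Qed.

Lemma exists_tmax P : t_prime P -> exists M, t_maximal M /\ (forall x, P x -> M x).
Proof.
move=> [[PI P1 Pm] Pnz tP].
have Pprop : proper_t_ideal P by split.
pose T := {I : R -> Prop | proper_t_ideal I /\ (forall x, P x -> I x)}.
pose t0 : T := exist _ P (conj Pprop (fun x (h : P x) => h)).
pose Rl := fun (a b : T) => boolp.asbool (forall x, sval a x -> sval b x).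
have [M HM] : exists M, classical_sets.premaximal (fun x y => Rl x y) M.
  apply: (@classical_sets.ZL_preorder T t0 Rl).
  - by move=> t; apply/boolp.asboolP.
  - move=> r s t /boolp.asboolP H1 /boolp.asboolP H2; apply/boolp.asboolP => x.
    by move/H1/H2.
  - move=> A Atot.
    pose G := fun J => J = P \/ exists s, A s /\ J = sval s.
    have Gp : forall J, G J -> proper_t_ideal J /\ (forall x, P x -> J x).
      by move=> J [->|[s [_ ->]]]; [split | exact: (proj2_sig s)].
    have Gch : forall J1 J2, G J1 -> G J2 ->
        (forall x, J1 x -> J2 x) \/ (forall x, J2 x -> J1 x).
      move=> J1 J2 [->|[s [As ->]]] [->|[s' [As' ->]]].
      + by left.
      + by left; exact: (proj2 (proj2_sig s')).
      + by right; exact: (proj2 (proj2_sig s)).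
      + by case: (Atot _ _ As As') => /boolp.asboolP H; [left|right].
    have Up := @union_chain G P (or_introl erefl) (fun J GJ => proj1 (Gp J GJ)) Gch.
    have UP : forall x, P x -> (exists J, G J /\ J x).
      by move=> x Px; exists P; split => //; left.
    exists (exist (fun I => proper_t_ideal I /\ (forall x, P x -> I x)) _ (conj Up UP)) => s As; apply/boolp.asboolP => x sx /=.
    by exists (sval s); split => //; right; exists s.
exists (sval M); split; last exact: (proj2 (proj2_sig M)).
split; first exact: (proj1 (proj2_sig M)).
move=> J Jp MJ.
have PJ : forall x, P x -> J x by move=> x /(proj2 (proj2_sig M)) /MJ.
have H1 : Rl M (exist _ J (conj Jp PJ)) by apply/boolp.asboolP.
have /boolp.asboolP H2 := HM _ H1.
by move=> x; split; [exact: H2 | exact: MJ].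
Qed.

End ZornPart.

Theorem proposition1p2 (R : idomainType)
  (HRK : exists x : {fraction R}, ~ Rsub x)   (* K <> R *)
  (HR : PvMD R) (P : R -> Prop) (HP : t_prime P) :
  [<->
    branched P;
    exists a : R, minimal_prime_of (principal_ideal a) P;
    exists l : seq R, minimal_prime_of (Rgen l) P;
    exists I : R -> Prop, v_finite_divisorial I /\ minimal_prime_of I P;
    ~ set_eq P (fun x => exists Q, is_prime Q /\ strict_subset Q P /\ Q x)].
Proof.
have [Pp Pnz tP] := HP.
have P1 : ~ P 1 by case: Pp.
have [M [HM PM]] := @exists_tmax R P HP.
have Mid : is_ideal M by case: HM => [[]].
have Rv := @Rval_of R P M P1 PM Mid (HR M HM).
tfae.
- by move=> Hb; exact: (@notunion_principal R P Pp (@branched_notunion R P Rv Hb)).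
- by move=> [a Ha]; exact: (@principal_Rgen R P a Ha).
- by move=> [l Hl]; exact: (@Rgen_vfd R P l Hl tP Pnz).
- move=> [I [HI HIm]]; have [a Ha] := @vfd_principal R P Pp Rv I HI HIm.
  exact: (@branched_notunion R P Rv (@principal_branched R P Pp Rv a Ha Pnz)).
- move=> H; have [a Ha] := @notunion_principal R P Pp H.
  exact: (@principal_branched R P Pp Rv a Ha Pnz).
Qed.
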